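(* Let $\Omega\subset\mathbb{R}^n$ be a bounded Lipschitz domain, $T>0$, $\Omega_T=(0,T]\times\Omega$, $W$ a Hilbert space of measurable functions on $\Omega_T$ continuously embedded in $L^2(0,T;L^2(\Omega))$, $y_0\in L^2(\Omega)$, and $S:L^2(0,T;\mathbb{R}^2)\to W$ a continuous affine map with $\|S(u)\|_W\le C(\|u\|_{L^2(0,T;\mathbb{R}^2)}+\|y_0\|_{L^2(\Omega)})$ for a constant $C$ independent of $u,y_0$; let $S_0$ be its linear part (the map $S$ with $y_0=0$) and $\|S_0\|$ its operator norm from $L^2(0,T;\mathbb{R}^2)$ to $L^2(0,T;L^2(\omega_{\mathrm{obs}}))$, where $\omega_{\mathrm{obs}}\subset\Omega$. Let $y^d\in L^2(0,T;L^2(\omega_{\mathrm{obs}}))$, $\alpha>0$, $\varepsilon>0$, $\mathcal{U}=H^1(0,T;\mathbb{R}^2)$, and $\beta>\|S_0\|^2+\alpha+\pi^2$. Let $\bar u\in\mathcal{U}$ be a local minimizer over $\mathcal{U}$ of $$J_\beta(u)=\frac12\|Su-y^d\|^2_{L^2(0,T;L^2(\omega_{\mathrm{obs}}))}+\frac\alpha2\|u\|^2_{L^2(0,T;\mathbb{R}^2)}+\frac\varepsilon2\|u_t\|^2_{L^2(0,T;\mathbb{R}^2)}+\beta\int_0^T|u_1(t)u_2(t)|\,dt.$$ Then $\bar u_1(t)\bar u_2(t)=0$ for all $t\in[0,T]$ apart from intervals of length at most $\sqrt\varepsilon$; i.e. every interval contained in $\{t\in[0,T]:\bar u_1(t)\bar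 u_2(t)\neq0\}$ has length at most $\sqrt{\varepsilon}$.
   Context: $Su=S(u)$ is the state for control $u=(u_1,u_2)$, restricted to $(0,T)\times\omega_{\mathrm{obs}}$ in the tracking term. Elements of $H^1(0,T;\mathbb{R}^2)$ are identified with their continuous representatives. *)

(* Defs.v *)
From HB Require Import structures.
From mathcomp Require Import all_boot all_order all_algebra.
From mathcomp Require Import all_classical all_reals all_analysis.
Set Implicit Arguments. Unset Strict Implicit. Unset Printing Implicit Defensive.
Import Order.TTheory GRing.Theory Num.Theory.
Import numFieldNormedType.Exports.
Local Open Scope classical_set_scope.
Local Open Scope ring_scope.

(* A control u = (u_1, u_2) : two real functions of time (only their values
   on [0,T] matter). *)
Definition ctrl (R : realType) := ((R -> R) * (R -> R))%type.

Section Defs.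
Context (R : realType).
Notation leb := (@lebesgue_measure R).

Definition Icc (a b : R) : set R := `[a, b].

Definition L2_0T (T : R) (f : R -> R) : Prop :=
  measurable_fun (Icc 0 T) f /\
  (\int[leb]_(x in Icc 0 T) ((f x) ^+ 2)%:E < +oo)%E.

Definition sqnorm_0T (T : R) (f : R -> R) : R :=
  fine (\int[leb]_(x in Icc 0 T) ((f x) ^+ 2)%:E).

Definition L2ctrl (T : R) (u : ctrl R) : Prop := L2_0T T u.1 /\ L2_0T T u.2.

Definition sqnorm_ctrl (T : R) (u : ctrl R) : R :=
  sqnorm_0T T u.1 + sqnorm_0T T u.2.

Definition ctrl_sub (u v : ctrl R) : ctrl R :=
  (fun t => u.1 t - v.1 t, fun t => u.2 t - v.2 t).

Definition ctrl_lin (a : R) (u v : ctrl R) : ctrl R :=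
  (fun t => a * u.1 t + v.1 t, fun t => a * u.2 t + v.2 t).

(* u in H^1(0,T;R^2) (continuous representative on [0,T]) with weak
   derivative g = u_t in L^2(0,T;R^2):  u(t) = u(0) + int_0^t g  on [0,T]. *)
Definition H1ctrl (T : R) (u g : ctrl R) : Prop :=
  L2ctrl T g /\
  (forall t, 0 <= t <= T ->
     u.1 t = u.1 0 + fine (\int[leb]_(x in Icc 0 t) (g.1 x)%:E)) /\
  (forall t, 0 <= t <= T ->
     u.2 t = u.2 0 + fine (\int[leb]_(x in Icc 0 t) (g.2 x)%:E)).

Definition sqdist_H1 (T : R) (u g v h : ctrl R) : R :=
  sqnorm_ctrl T (ctrl_sub u v) + sqnorm_ctrl T (ctrl_sub g h).

Definition L2mu d (X : measurableType d) (mu : {measure set X -> \bar R})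
  (f : X -> R) : Prop :=
  measurable_fun setT f /\ (\int[mu]_x ((f x) ^+ 2)%:E < +oo)%E.

Definition sqnorm_mu d (X : measurableType d) (mu : {measure set X -> \bar R})
  (f : X -> R) : R :=
  fine (\int[mu]_x ((f x) ^+ 2)%:E).

Definition opnorm d (X : measurableType d) (mu : {measure set X -> \bar R})
  (T : R) (S0 : ctrl R -> X -> R) : R :=
  sup [set y | exists u, L2ctrl T u /\ sqnorm_ctrl T u <= 1 /\
                         y = Num.sqrt (sqnorm_mu mu (S0 u))].

(* The cost J_beta(u), with u_t = g; the state is S u = s0 + S0 u. *)
Definition Jbeta d (X : measurableType d) (mu : {measure set X -> \bar R})
  (T : R) (s0 : X -> R) (S0 : ctrl R -> X -> R) (yd : X -> R)
  (alpha eps beta : R) (u g : ctrl R) : R :=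
  2^-1 * sqnorm_mu mu (fun x => s0 x + S0 u x - yd x)
  + alpha / 2 * sqnorm_ctrl T u
  + eps / 2 * sqnorm_ctrl T g
  + beta * fine (\int[leb]_(t in Icc 0 T) (`|u.1 t * u.2 t|)%:E).

End Defs.

(* Main.v *)
Require Import Defs.
From HB Require Import structures.
From mathcomp Require Import all_boot all_order all_algebra.
From mathcomp Require Import all_classical all_reals all_analysis.
From mathcomp Require Import measurable_realfun.
From mathcomp Require Import ring lra.
Set Implicit Arguments. Unset Strict Implicit. Unset Printing Implicit Defensive.
Import Order.TTheory GRing.Theory Num.Theory.
Import numFieldNormedType.Exports.
Local Open Scope classical_set_scope.
Local Open Scope ring_scope.


Section L2gen.
Context {R : realType} {d : measure_display} {X : measurableType d}
  (mu : {measure set X -> \bar R}) (D : set X).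
Hypothesis mD : measurable D.

Definition L2D (f : X -> R) := measurable_fun D f /\
  (\int[mu]_(x in D) ((f x)^+2)%:E < +oo)%E.

Definition sqn (f : X -> R) := \int[mu]_(x in D) ((f x)^+2).

Lemma iD f g : mu.-integrable D (EFin \o f) -> mu.-integrable D (EFin \o g) ->
  mu.-integrable D (EFin \o (fun x => f x + g x)).
Proof.
move=> hf hg; apply: (eq_integrable mD _ _ _ (integrableD mD hf hg)).
by move=> x _.
Qed.

Lemma iZ k f : mu.-integrable D (EFin \o f) ->
  mu.-integrable D (EFin \o (fun x => k * f x)).
Proof.
move=> hf; apply: (eq_integrable mD _ _ _ (integrableZl mD k hf)).
by move=> x _.
Qed.

Lemma L2D_int f : L2D f -> mu.-integrable D (EFin \o (fun x => f x ^+ 2)).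
Proof.
case=> mf fi; apply/integrableP; split.
  by apply/measurable_EFinP; apply: measurable_funX.
rewrite (eq_integral (fun x => ((f x)^+2)%:E))// => x _.
by rewrite /comp /= ger0_norm // sqr_ge0.
Qed.

Lemma int_L2D (f : X -> R) : measurable_fun D f ->
  mu.-integrable D (EFin \o (fun x => f x ^+ 2)) -> L2D f.
Proof.
move=> mf /integrableP [_ fi]; split => //.
rewrite (eq_integral (fun x => `|((f x)^+2)%:E|)%E)// => x _.
by rewrite /comp /= ger0_norm // sqr_ge0.
Qed.

Lemma absprod (a b : R) : `|a * b| <= a ^+ 2 + b ^+ 2.
Proof.
have [h|h] := lerP 0 (a * b).
  by rewrite ger0_norm //; nra.
by rewrite ltr0_norm //; nra.
Qed.

Lemma L2D_mul f g : L2D f -> L2D g ->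
  mu.-integrable D (EFin \o (fun x => f x * g x)).
Proof.
move=> Lf Lg.
have := iD (L2D_int Lf) (L2D_int Lg); apply: le_integrable => //.
  by apply/measurable_EFinP; apply: measurable_funM; [case: Lf|case: Lg].
move=> x _; rewrite /comp /= lee_fin.
rewrite [X in _ <= X]ger0_norm; last by rewrite addr_ge0 // sqr_ge0.
exact: absprod.
Qed.

Lemma L2D_lin s f g : L2D f -> L2D g -> L2D (fun x => s * g x + f x).
Proof.
move=> Lf Lg.
have mf := Lf.1; have mg := Lg.1.
have mh : measurable_fun D (fun x => s * g x + f x).
  by apply: measurable_funD => //; apply: measurable_funM => //;
     exact: measurable_cst.
apply: int_L2D => //.
have i1 := iZ (2 * s^+2) (L2D_int Lg).
have i2 := iZ 2 (L2D_int Lf).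
have := iD i1 i2; apply: le_integrable => //.
  by apply/measurable_EFinP; apply: measurable_funX.
move=> x _; rewrite /comp /= lee_fin.
rewrite ger0_norm ?sqr_ge0 // ger0_norm; last first.
  by rewrite addr_ge0 // mulr_ge0 // ?sqr_ge0 // mulr_ge0 // sqr_ge0.
have := sqr_ge0 (s * g x - f x); nra.
Qed.

Lemma sqexp s f g : L2D f -> L2D g ->
  sqn (fun x => s * g x + f x) =
  sqn f + 2 * s * \int[mu]_(x in D) (f x * g x) + s ^+ 2 * sqn g.
Proof.
move=> Lf Lg.
rewrite /sqn (eq_Rintegral _ (g := fun x =>
   (f x ^+ 2 + (2 * s) * (f x * g x)) + s ^+ 2 * g x ^+ 2)); last first.
  by move=> x _; ring.
have i1 := L2D_int Lf; have i2 := L2D_mul Lf Lg; have i3 := L2D_int Lg.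
rewrite RintegralD //; last 2 first.
- exact: iD (iZ _ i2).
- exact: iZ.
rewrite RintegralD //; last exact: iZ.
by rewrite !RintegralZl // mulrA.
Qed.

Lemma sqn_ge0 f : 0 <= sqn f.
Proof. by apply: Rintegral_ge0 => x _; exact: sqr_ge0. Qed.


Lemma L2D_eq f g : (forall x, f x = g x) -> L2D f -> L2D g.
Proof. by move=> fg; have -> : g = f by apply/funext => x; rewrite fg. Qed.

Lemma L2D_Z c f : L2D f -> L2D (fun x => c * f x).
Proof.
move=> Lf; apply: int_L2D.
  by apply: measurable_funM; [exact: measurable_cst|case: Lf].
apply: (eq_integrable mD _ _ _ (iZ (c ^+ 2) (L2D_int Lf))).
by move=> x _; rewrite /comp exprMn.
Qed.

Lemma L2D_abs f g : L2D f -> L2D g ->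
  mu.-integrable D (EFin \o (fun x => `|f x * g x|)).
Proof.
move=> Lf Lg.
have := iD (L2D_int Lf) (L2D_int Lg); apply: le_integrable => //.
  apply/measurable_EFinP.
  have mfg : measurable_fun D (fun x => f x * g x).
    by apply: measurable_funM; [case: Lf|case: Lg].
  exact: (measurableT_comp (@normr_measurable R setT) mfg).
move=> x _; rewrite /comp /= lee_fin normr_id.
rewrite [X in _ <= X]ger0_norm; last by rewrite addr_ge0 // sqr_ge0.
exact: absprod.
Qed.


Lemma L2D_comb3 f g h : L2D f -> L2D g -> L2D h -> L2D (fun x => f x + g x - h x).
Proof.
move=> Lf Lg Lh.
apply: (L2D_eq _ (L2D_lin (-1) (L2D_lin 1 Lf Lg) Lh)) => x; ring.
Qed.

Lemma RintDZB (f g h : X -> R) (s t : R) :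
  mu.-integrable D (EFin \o f) -> mu.-integrable D (EFin \o g) ->
  mu.-integrable D (EFin \o h) ->
  \int[mu]_(x in D) (f x + s * g x - t * h x) =
  \int[mu]_(x in D) f x + s * \int[mu]_(x in D) g x - t * \int[mu]_(x in D) h x.
Proof.
move=> i1 i2 i3.
rewrite RintegralB //; last exact: iZ.
  by rewrite RintegralD ?RintegralZl //; exact: iZ.
by apply: iD => //; exact: iZ.
Qed.

End L2gen.


Section Trig.
Context {R : realType}.
Notation leb := (@lebesgue_measure R).

Lemma FTC_glob (f F : R -> R) (a b : R) : a < b -> continuous f ->
  (forall x : R, is_derive x (1:R) F (f x)) ->
  \int[leb]_(x in `[a, b]) f x = F b - F a.
Proof.
move=> ab cf dF.
have cF : continuous F.
  move=> x; apply/differentiable_continuous/derivable1_diffP.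
  apply: ex_derive.
have := @continuous_FTC2 R f F a b ab.
rewrite /Rintegral => ->.
- by rewrite -EFinB.
- by apply: continuous_subspaceT => x; exact: cf.
- split.
  + by move=> x _; apply: ex_derive.
  + exact: cvg_at_right_filter (cF a).
  + exact: cvg_at_left_filter (cF b).
- by move=> x _; rewrite derive1E; exact: derive_val.
Qed.

Variables (p k : R).

Lemma der_aff (x : R) : is_derive x (1:R) (fun t => k * (t - p)) k.
Proof.
have h1 : is_derive x (1:R) (fun t : R => t - p) 1.
  have h : is_derive x (1:R) (@id R - cst p) (1 - 0).
    by apply: is_deriveB.
  rewrite subr0 in h; exact: h.
have h2 : is_derive x (1:R) (fun t => k * (t - p)) (k * 1) := is_deriveZ k h1.
by rewrite mulr1 in h2.
Qed.

Lemma der_sin (x : R) : is_derive x (1:R) (fun t => sin (k * (t - p))) (k * cos (k * (x - p))).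
Proof.
have h : is_derive x (1:R) (fun t => sin (k * (t - p))) (cos (k * (x - p)) * k)
  := is_derive1_comp (is_derive_sin _) (der_aff x).
by rewrite mulrC in h.
Qed.

Lemma der_cos (x : R) : is_derive x (1:R) (fun t => cos (k * (t - p))) (- (k * sin (k * (x - p)))).
Proof.
have h : is_derive x (1:R) (fun t => cos (k * (t - p))) (- sin (k * (x - p)) * k)
  := is_derive1_comp (is_derive_cos _) (der_aff x).
by rewrite mulNr mulrC in h.
Qed.


Hypothesis k0 : k != 0.

Lemma der_F2 (x : R) : is_derive x (1:R)
  (fun t => 2^-1 * t - (2 * k)^-1 * (sin (k * (t - p)) * cos (k * (t - p))))
  (sin (k * (x - p)) ^+ 2).
Proof.
have hM : is_derive x (1:R) (fun t => sin (k * (t - p)) * cos (k * (t - p)))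
  (sin (k * (x - p)) * (- (k * sin (k * (x - p)))) +
   cos (k * (x - p)) * (k * cos (k * (x - p)))) :=
  is_deriveM (der_sin x) (der_cos x).
have hZ := is_deriveZ (2 * k)^-1 hM.
have hI := is_deriveZ (2:R)^-1 (is_derive_id x (1:R)).
have hB : is_derive x (1:R)
  (fun t => 2^-1 * t - (2 * k)^-1 * (sin (k * (t - p)) * cos (k * (t - p))))
  (2^-1 * 1 - (2 * k)^-1 * (sin (k * (x - p)) * (- (k * sin (k * (x - p)))) +
   cos (k * (x - p)) * (k * cos (k * (x - p))))) := is_deriveB hI hZ.
suff E : sin (k * (x - p)) ^+ 2 = 2^-1 * 1 - (2 * k)^-1 * (sin (k * (x - p)) * (- (k * sin (k * (x - p)))) +
   cos (k * (x - p)) * (k * cos (k * (x - p))))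
  by rewrite E.
have hc := cos2Dsin2 (k * (x - p)).
have -> : cos (k * (x - p)) * (k * cos (k * (x - p))) =
  k * (1 - sin (k * (x - p)) ^+ 2) by rewrite -hc; ring.
by field.
Qed.

Lemma der_G2 (x : R) : is_derive x (1:R)
  (fun t => 2^-1 * t + (2 * k)^-1 * (sin (k * (t - p)) * cos (k * (t - p))))
  (cos (k * (x - p)) ^+ 2).
Proof.
have hM : is_derive x (1:R) (fun t => sin (k * (t - p)) * cos (k * (t - p)))
  (sin (k * (x - p)) * (- (k * sin (k * (x - p)))) +
   cos (k * (x - p)) * (k * cos (k * (x - p)))) :=
  is_deriveM (der_sin x) (der_cos x).
have hZ := is_deriveZ (2 * k)^-1 hM.
have hI := is_deriveZ (2:R)^-1 (is_derive_id x (1:R)).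
have hB : is_derive x (1:R)
  (fun t => 2^-1 * t + (2 * k)^-1 * (sin (k * (t - p)) * cos (k * (t - p))))
  (2^-1 * 1 + (2 * k)^-1 * (sin (k * (x - p)) * (- (k * sin (k * (x - p)))) +
   cos (k * (x - p)) * (k * cos (k * (x - p))))) := is_deriveD hI hZ.
suff E : cos (k * (x - p)) ^+ 2 = 2^-1 * 1 + (2 * k)^-1 * (sin (k * (x - p)) * (- (k * sin (k * (x - p)))) +
   cos (k * (x - p)) * (k * cos (k * (x - p))))
  by rewrite E.
have hc := cos2Dsin2 (k * (x - p)).
have -> : sin (k * (x - p)) * (- (k * sin (k * (x - p)))) =
  - k * (1 - cos (k * (x - p)) ^+ 2) by rewrite -hc; ring.
by field.
Qed.

End Trig.

Section Phi.
Context {R : realType}.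
Notation leb := (@lebesgue_measure R).

Lemma der_cont (f df : R -> R) : (forall x, is_derive x (1:R) f (df x)) -> continuous f.
Proof.
move=> dF x; apply/differentiable_continuous/derivable1_diffP.
by apply: ex_derive.
Qed.

Lemma cont_int (f : R -> R) (a b : R) : continuous f ->
  leb.-integrable `[a, b] (EFin \o f).
Proof.
move=> cf; apply: continuous_compact_integrable; first exact: segment_compact.
by apply: continuous_subspaceT => x; exact: cf.
Qed.

Lemma L2_bnd (T M : R) (f : R -> R) : measurable_fun `[0, T] f ->
  (forall x, f x ^+ 2 <= M) -> L2D leb `[0, T] f.
Proof.
move=> mf fM; apply: int_L2D => //.
have ic := cont_int 0 T (@cst_continuous _ _ M).
apply: le_integrable ic => //.
  by apply/measurable_EFinP; exact: measurable_funX.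
move=> x _; rewrite /comp /= lee_fin ger0_norm ?sqr_ge0 //.
exact: le_trans (fM x) (ler_norm _).
Qed.

Variables (p L : R).
Hypothesis L0 : 0 < L.
Let k := pi / L.
Lemma k0 : k != 0.
Proof. by rewrite /k mulf_neq0 // ?invr_eq0 gt_eqF // pi_gt0. Qed.
Lemma kL : k * (p + L - p) = pi.
Proof. by rewrite addrAC subrr add0r /k mulfVK // gt_eqF. Qed.

Definition sS t := sin (k * (t - p)).
Definition cC t := k * cos (k * (t - p)).
Definition phi := sS \_ `[p, p + L].
Definition dphi := cC \_ `]p, p + L[.

Lemma pL : p < p + L. Proof. by rewrite ltrDl. Qed.

Lemma intS2 : \int[leb]_(x in `[p, p + L]) (sS x ^+ 2) = L / 2.
Proof.
rewrite (FTC_glob pL _ (der_F2 p k0)); last first.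
  apply: (der_cont (df := fun x => sS x * (k * cos (k * (x - p))) +
                                    sS x * (k * cos (k * (x - p))))) => x.
  have h : is_derive x (1:R) (fun t => sS t * sS t)
     (sS x * (k * cos (k * (x - p))) + sS x * (k * cos (k * (x - p)))) :=
     is_deriveM (der_sin p k x) (der_sin p k x).
  exact: h.
by rewrite kL sinpi subrr mulr0 sin0 mul0r mulr0 subr0 mul0r mulr0 subr0; field.
Qed.

Lemma intC2 : \int[leb]_(x in `[p, p + L]) (cos (k * (x - p)) ^+ 2) = L / 2.
Proof.
rewrite (FTC_glob pL _ (der_G2 p k0)); last first.
  apply: (der_cont (df := fun x => cos (k * (x - p)) * (- (k * sS x)) +
                                    cos (k * (x - p)) * (- (k * sS x)))) => x.
  have h : is_derive x (1:R) (fun t => cos (k * (t - p)) * cos (k * (t - p)))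
     (cos (k * (x - p)) * (- (k * sS x)) + cos (k * (x - p)) * (- (k * sS x))) :=
     is_deriveM (der_cos p k x) (der_cos p k x).
  exact: h.
by rewrite kL sinpi subrr mulr0 sin0 !mul0r !mulr0 ?subr0 ?addr0; field.
Qed.


Lemma pt0 : (point : R) = 0. Proof. by []. Qed.

Lemma cont_sS : continuous sS.
Proof. exact: (der_cont (der_sin p k)). Qed.

Lemma cont_cC : continuous cC.
Proof.
apply: (der_cont (df := fun x => k * (- (k * sin (k * (x - p)))))) => x.
exact: (is_deriveZ k (der_cos p k x)).
Qed.

Lemma cont_cos2 : continuous (fun x => cos (k * (x - p)) ^+ 2).
Proof.
apply: (der_cont (df := fun x => cos (k * (x - p)) * (- (k * sS x)) +
                                  cos (k * (x - p)) * (- (k * sS x)))) => x.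
exact: (is_deriveM (der_cos p k x) (der_cos p k x)).
Qed.

Lemma int_oc (f : R -> R) (a b : R) : continuous f ->
  \int[leb]_(x in `]a, b[) f x = \int[leb]_(x in `[a, b]) f x.
Proof.
move=> cf.
have ic := cont_int a b cf.
rewrite Rintegral_itv_bndo_bndc; last first.
  by apply: integrableS ic => //; apply: subset_itv; rewrite bnd_simp.
rewrite Rintegral_itv_obnd_cbnd //.
by apply: integrableS ic => //; apply: subset_itv; rewrite bnd_simp.
Qed.

Lemma meas_restr (f : R -> R) (D E : set R) : measurable D -> measurable E ->
  continuous f -> measurable_fun E (f \_ D).
Proof.
move=> mD mE cf; apply: (measurable_restrict f mD mE).1.
apply: (measurable_funS measurableT) => //.
exact: continuous_measurable_fun.
Qed.

Lemma phi_bnd x : phi x ^+ 2 <= 1.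
Proof.
rewrite /phi patchE; case: ifP => _; last by rewrite pt0 expr0n.
have := cos2Dsin2 (k * (x - p)); rewrite /sS => <-.
by rewrite lerDr sqr_ge0.
Qed.

Lemma dphi_bnd x : dphi x ^+ 2 <= k ^+ 2.
Proof.
rewrite /dphi patchE; case: ifP => _; last by rewrite pt0 expr0n sqr_ge0.
rewrite /cC exprMn.
have h := cos2Dsin2 (k * (x - p)).
have := sqr_ge0 (k * sin (k * (x - p))); rewrite exprMn.
have := sqr_ge0 k; nra.
Qed.

Lemma L2_phi T : L2D leb `[0, T] phi.
Proof.
apply: (L2_bnd (M := 1)); last exact: phi_bnd.
exact: meas_restr cont_sS.
Qed.

Lemma L2_dphi T : L2D leb `[0, T] dphi.
Proof.
apply: (L2_bnd (M := k ^+ 2)); last exact: dphi_bnd.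
exact: meas_restr cont_cC.
Qed.

Lemma sqn_phi T : `[p, p + L] `<=` `[0, T] -> sqn leb `[0, T] phi = L / 2.
Proof.
move=> sub.
rewrite /sqn; transitivity (\int[leb]_(x in `[0, T]) (((fun x => sS x ^+ 2) \_ `[p, p + L]) x)).
  by apply: eq_Rintegral => x _; rewrite /phi !patchE; case: ifP => // _; rewrite pt0 expr0n.
by rewrite -Rintegral_mkcondr setIidr // intS2.
Qed.

Lemma sqn_dphi T : `[p, p + L] `<=` `[0, T] -> sqn leb `[0, T] dphi = k ^+ 2 * (L / 2).
Proof.
move=> sub.
rewrite /sqn; transitivity (\int[leb]_(x in `[0, T]) (((fun x => k ^+ 2 * cos (k * (x - p)) ^+ 2)
   \_ `]p, p + L[) x)).
  apply: eq_Rintegral => x _; rewrite /dphi !patchE; case: ifP => _; last by rewrite pt0 expr0n.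
  by rewrite /cC exprMn.
rewrite -Rintegral_mkcondr setIidr; last first.
  by apply: subset_trans sub; apply: subset_itv; rewrite bnd_simp.
rewrite RintegralZl //; last first.
  apply: integrableS (cont_int p (p + L) cont_cos2) => //.
  by apply: subset_itv; rewrite bnd_simp.
by rewrite int_oc ?intC2 //; exact: cont_cos2.
Qed.

Lemma sS_p : sS p = 0.
Proof. by rewrite /sS subrr mulr0 sin0. Qed.

Lemma sS_pL : sS (p + L) = 0.
Proof. by rewrite /sS kL sinpi. Qed.

Lemma phi0 : 0 <= p -> phi 0 = 0.
Proof.
move=> p0; rewrite /phi patchE; case: ifP => //.
move/set_mem; rewrite /= in_itv /= => /andP[h1 _].
have e : p = 0 by apply/eqP; rewrite eq_le p0 h1.
by rewrite /sS e subrr mulr0 sin0.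
Qed.

Lemma phi_rep t : 0 <= p -> 0 <= t ->
  phi t = phi 0 + \int[leb]_(x in `[0, t]) dphi x.
Proof.
move=> p0 t0; rewrite phi0 // add0r /dphi -Rintegral_mkcondr.
have [tp|pt] := leP t p.
  have -> : `[0, t] `&` `]p, p + L[ = set0.
    apply/seteqP; split => x //= [].
    rewrite /= !in_itv /= => /andP[_ h1] /andP[h2 _].
    by have := lt_le_trans h2 (le_trans h1 tp); rewrite ltxx.
  rewrite Rintegral_set0 /phi patchE; case: ifP => //.
  move/set_mem; rewrite /= in_itv /= => /andP[h1 _].
  have -> : t = p by apply/eqP; rewrite eq_le tp h1.
  exact: sS_p.
have FT := fun b (pb : p < b) => FTC_glob pb cont_cC (der_sin p k).
have [tL|Lt] := ltP t (p + L).
  have -> : `[0, t] `&` `]p, p + L[ = [set` `]p, t]].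
    apply/seteqP; split => x /=; rewrite !in_itv /=.
      by move=> [/andP[h1 h2] /andP[h3 h4]]; apply/andP; split.
    move=> /andP[h1 h2]; split; apply/andP; split => //.
      by apply: le_trans (ltW h1).
    exact: le_lt_trans h2 tL.
  rewrite Rintegral_itv_obnd_cbnd; last first.
    by apply: integrableS (cont_int p t cont_cC) => //; apply: subset_itv;
       rewrite bnd_simp.
  rewrite FT // -/(sS t) -/(sS p) sS_p subr0 /phi patchE ifT //.
  by apply/mem_set; rewrite /= in_itv /= (ltW pt) ltW.
have -> : `[0, t] `&` `]p, p + L[ = [set` `]p, p + L[].
  apply/seteqP; split => x /=; rewrite !in_itv /=.
    by move=> [_ h].
  move=> /andP[h1 h2]; split; apply/andP; split => //.
    by apply: le_trans (ltW h1).
  exact: le_trans (ltW h2) Lt.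
rewrite int_oc; last exact: cont_cC.
rewrite FT ?pL // -/(sS (p + L)) -/(sS p) sS_p sS_pL subr0 /phi patchE.
case: ifP => // /set_mem; rewrite /= in_itv /= => /andP[_ h].
have -> : t = p + L by apply/eqP; rewrite eq_le h Lt.
exact: sS_pL.
Qed.


End Phi.


Section Ucont.
Context {R : realType}.
Notation leb := (@lebesgue_measure R).

Lemma wcM (A : set R) (f g : R -> R) : {within A, continuous f} ->
  {within A, continuous g} -> {within A, continuous (fun x => f x * g x)}.
Proof. by move=> cf cg x; apply: continuousM; [exact: cf|exact: cg]. Qed.

Lemma wcD (A : set R) (f g : R -> R) : {within A, continuous f} ->
  {within A, continuous g} -> {within A, continuous (fun x => f x + g x)}.
Proof. by move=> cf cg x; apply: continuousD; [exact: cf|exact: cg]. Qed.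

Lemma L2_int1 (T : R) (g : R -> R) : L2D leb `[0, T] g ->
  leb.-integrable `[0, T] (EFin \o g).
Proof.
move=> Lg.
have L1 : L2D leb `[0, T] (fun _ => 1).
  apply: (L2_bnd (M := 1)); first exact: measurable_cst.
  by move=> _; rewrite expr1n.
apply: (eq_integrable _ _ _ _ (L2D_mul _ Lg L1)) => //.
by move=> x _; rewrite /comp mulr1.
Qed.

Lemma rep_cont (T : R) (u g : R -> R) : 0 <= T -> L2D leb `[0, T] g ->
  {within `[0, T], continuous (fun t => u 0 + \int[leb]_(x in `[0, t]) g x)}.
Proof.
move=> T0 Lg; apply: wcD; first exact: cst_continuous.
exact: (parameterized_integral_continuous T0 (L2_int1 Lg)).
Qed.

Lemma L2_cont (T : R) (u F : R -> R) : {within `[0, T], continuous F} ->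
  (forall t, 0 <= t <= T -> u t = F t) -> L2D leb `[0, T] u.
Proof.
move=> cF uF.
have eqD : {in [set` `[0, T]], F =1 u}.
  by move=> x /set_mem; rewrite /= in_itv /= => /uF ->.
apply: int_L2D => //.
  apply: (eq_measurable_fun F) => //.
  exact: subspace_continuous_measurable_fun.
have := continuous_compact_integrable (@segment_compact _ 0 T) (wcM cF cF).
apply: eq_integrable => //.
by move=> x xD; rewrite /comp (eqD x xD).
Qed.

Lemma lower_bnd (F : R -> R) (a b : R) : a <= b -> {within `[a, b], continuous F} ->
  (forall t, a <= t <= b -> F t != 0) ->
  exists c, 0 < c /\ forall t, a <= t <= b -> c <= F t ^+ 2.
Proof.
move=> ab cF nz.
have [c cab minc] := EVT_min ab (wcM cF cF).
exists (F c ^+ 2); split.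
  rewrite lt_neqAle sqr_ge0 andbT eq_sym sqrf_eq0.
  by apply: nz; move: cab; rewrite in_itv.
by move=> t tab; rewrite expr2 (minc t) //.
Qed.

Lemma sign_const (F : R -> R) (a b : R) : a <= b -> {within `[a, b], continuous F} ->
  (forall t, a <= t <= b -> F t != 0) ->
  forall t, a <= t <= b -> 0 < F a * F t.
Proof.
move=> ab cF nz t /andP[at0 tb].
rewrite ltNge; apply/negP => h.
have cF' : {within `[a, t], continuous F}.
  by apply: continuous_subspaceW cF; apply: subset_itv; rewrite bnd_simp.
have [c cat0 Fc] : exists2 c, c \in `[a, t] & F c = 0.
  apply: IVT => //.
  have Fa : F a != 0 by apply: nz; rewrite lexx ab.
  rewrite ge_min le_max.
  have [ha|ha] := leP (F a) 0.
    have ha' : F a < 0 by rewrite lt_neqAle Fa ha.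
    have ht : 0 <= F t by nra.
    by rewrite ht orbT.
  have ht : F t <= 0 by nra.
  by rewrite ht /= (ltW ha).
move: cat0; rewrite in_itv /= => /andP[h1 h2].
suff : a <= c <= b by move/nz; rewrite Fc eqxx.
by rewrite h1 /= (le_trans h2 tb).
Qed.

End Ucont.


Section Op.
Context {R : realType} {d : measure_display} {X : measurableType d}
  (mu : {measure set X -> \bar R}).

Lemma sqn_ae (f g : X -> R) : measurable_fun setT f -> measurable_fun setT g ->
  {ae mu, forall x, f x = g x} -> sqn mu setT f = sqn mu setT g.
Proof.
move=> mf mg ae; rewrite /sqn /Rintegral; congr fine.
apply: ae_eq_integral => //.
- by apply/measurable_EFinP; exact: measurable_funX.
- by apply/measurable_EFinP; exact: measurable_funX.
- by apply: filterS ae => x /= -> _.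
Qed.

Lemma L2_0T_lin (T s : R) (f g : R -> R) : L2_0T T f -> L2_0T T g ->
  L2_0T T (fun t => s * g t + f t).
Proof. exact: (@L2D_lin R _ _ lebesgue_measure `[0, T] (measurable_itv _) s f g). Qed.

Lemma sqnorm_muE (f : X -> R) : sqnorm_mu mu f = sqn mu setT f.
Proof. by []. Qed.

Lemma sqnorm_0TE (T : R) (f : R -> R) :
  sqnorm_0T T f = sqn (@lebesgue_measure R) `[0, T] f.
Proof. by []. Qed.


Lemma sqnc_ge0 (T : R) (u : ctrl R) : 0 <= sqnorm_ctrl T u.
Proof. by rewrite /sqnorm_ctrl !sqnorm_0TE addr_ge0 // sqn_ge0. Qed.

Lemma opnorm_bnd (T : R) (S0 : ctrl R -> X -> R) (C : R) :
  (forall u, L2ctrl T u -> L2mu mu (S0 u)) ->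
  (forall u v a, L2ctrl T u -> L2ctrl T v ->
     {ae mu, forall x, S0 (ctrl_lin a u v) x = a * S0 u x + S0 v x}) ->
  (forall u, L2ctrl T u -> sqnorm_mu mu (S0 u) <= C ^+ 2 * sqnorm_ctrl T u) ->
  forall w, L2ctrl T w -> 0 < sqnorm_ctrl T w ->
  sqnorm_mu mu (S0 w) <= opnorm mu T S0 ^+ 2 * sqnorm_ctrl T w.
Proof.
move=> LS lin HC w Lw npos.
set n := sqnorm_ctrl T w.
set r := Num.sqrt n.
have r0 : 0 < r by rewrite sqrtr_gt0.
have rn : r ^+ 2 = n by rewrite sqr_sqrtr // ltW.
set z := ctrl_lin (r^-1 - 1) w w.
have Lz : L2ctrl T z.
  rewrite /z /ctrl_lin; case: Lw => L1 L2; split => /=.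
    exact: L2_0T_lin.
  exact: L2_0T_lin.
have eqz : forall f : R -> R, L2_0T T f ->
  sqnorm_0T T (fun t => (r^-1 - 1) * f t + f t) = r^-2 * sqnorm_0T T f.
  move=> f Lf; rewrite !sqnorm_0TE /sqn -RintegralZl //; last first.
    by apply: L2D_int.
  apply: eq_Rintegral => x _.
  rewrite (_ : (r^-1 - 1) * f x + f x = r^-1 * f x); last by ring.
  by rewrite exprMn exprVn.
have nz : sqnorm_ctrl T z = 1.
  case: Lw => Lw1 Lw2.
  rewrite /sqnorm_ctrl /= !eqz // -mulrDr (_ : sqnorm_0T T w.1 + sqnorm_0T T w.2 = n) // -rn mulVf //.
  by rewrite expf_neq0 // gt_eqF.
have Sz : sqnorm_mu mu (S0 z) = r^-2 * sqnorm_mu mu (S0 w).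
  rewrite !sqnorm_muE (sqn_ae (g := fun x => r^-1 * S0 w x)).
  - rewrite /sqn -RintegralZl //; last exact: L2D_int (LS _ Lw).
    by apply: eq_Rintegral => x _; rewrite exprMn exprVn.
  - by case: (LS _ Lz).
  - by apply: measurable_funM; [exact: measurable_cst| case: (LS _ Lw)].
  - apply: filterS (lin w w (r^-1 - 1) Lw Lw) => x ->.
    by rewrite -{2}(mul1r (S0 w x)) -mulrDl subrK.
have ub : has_ubound [set y | exists u, L2ctrl T u /\ sqnorm_ctrl T u <= 1 /\
                         y = Num.sqrt (sqnorm_mu mu (S0 u))].
  exists `|C|; move=> y [u [Lu [u1 ->]]].
  rewrite -sqrtr_sqr ler_wsqrtr //.
  apply: le_trans (HC u Lu) _.
  by rewrite -[leRHS](mulr1 (C ^+ 2)); apply: ler_wpM2l => //; exact: sqr_ge0.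
have le1 : Num.sqrt (sqnorm_mu mu (S0 z)) <= opnorm mu T S0.
  rewrite /opnorm; apply: (ub_le_sup ub).
  by exists z; split => //; split => //; rewrite nz.
have s0 : 0 <= sqnorm_mu mu (S0 z) by rewrite sqnorm_muE sqn_ge0.
have le2 : sqnorm_mu mu (S0 z) <= opnorm mu T S0 ^+ 2.
  rewrite -(sqr_sqrtr s0).
  have := sqrtr_ge0 (sqnorm_mu mu (S0 z)); nra.
move: le2; rewrite Sz -rn => h.
have r2 : 0 < r ^+ 2 by exact: exprn_gt0.
have -> : sqnorm_mu mu (S0 w) = r ^+ 2 * (r ^- 2 * sqnorm_mu mu (S0 w)).
  by rewrite mulrA mulfV ?mul1r // gt_eqF.
by rewrite [X in _ <= X]mulrC; apply: ler_wpM2l => //; exact: ltW.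
Qed.

End Op.


Section Aux.
Context {R : realType}.
Notation leb := (@lebesgue_measure R).

Lemma int_sub (T t : R) (f : R -> R) : t <= T -> L2_0T T f ->
  leb.-integrable `[0, t] (EFin \o f).
Proof.
move=> tT Lf; apply: integrableS (L2_int1 Lf) => //.
by apply: subset_itv; rewrite bnd_simp.
Qed.

Lemma L2_0T_Z (T c : R) (f : R -> R) : L2_0T T f -> L2_0T T (fun t => c * f t).
Proof. exact: (@L2D_Z R _ _ lebesgue_measure `[0, T] (measurable_itv _) c f). Qed.

Lemma sqexp0T (T s : R) (f g : R -> R) : L2_0T T f -> L2_0T T g ->
  sqnorm_0T T (fun t => s * g t + f t) = sqnorm_0T T f +
    2 * s * \int[leb]_(x in `[0, T]) (f x * g x) + s ^+ 2 * sqnorm_0T T g.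
Proof. exact: (@sqexp R _ _ lebesgue_measure `[0, T] (measurable_itv _) s f g). Qed.

Lemma sqnZ0T (T c : R) (f : R -> R) : L2_0T T f ->
  sqnorm_0T T (fun t => c * f t) = c ^+ 2 * sqnorm_0T T f.
Proof.
move=> Lf; rewrite !sqnorm_0TE /sqn -RintegralZl //; last first.
  by apply: L2D_int.
by apply: eq_Rintegral => x _; rewrite exprMn.
Qed.

Lemma rep_Z (T c : R) (f df : R -> R) : L2_0T T df ->
  (forall t, 0 <= t <= T -> f t = f 0 + \int[leb]_(x in `[0, t]) df x) ->
  forall t, 0 <= t <= T -> c * f t = c * f 0 + \int[leb]_(x in `[0, t]) (c * df x).
Proof.
move=> Ldf hf t /andP[t0 tT].
rewrite RintegralZl //; last exact: int_sub Ldf.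
by rewrite hf ?t0 ?tT // mulrDr.
Qed.

Lemma rep_lin (T s : R) (u g f df : R -> R) : L2_0T T g -> L2_0T T df ->
  (forall t, 0 <= t <= T -> u t = u 0 + \int[leb]_(x in `[0, t]) g x) ->
  (forall t, 0 <= t <= T -> f t = f 0 + \int[leb]_(x in `[0, t]) df x) ->
  forall t, 0 <= t <= T ->
  s * f t + u t = (s * f 0 + u 0) + \int[leb]_(x in `[0, t]) (s * df x + g x).
Proof.
move=> Lg Ldf hu hf t /andP[t0 tT].
have idf := int_sub tT Ldf; have ig := int_sub tT Lg.
rewrite RintegralD //; last exact: iZ.
rewrite RintegralZl // hf ?t0 ?tT // hu ?t0 ?tT //; ring.
Qed.

Lemma H1_lin (T s : R) (u g w w' : ctrl R) : H1ctrl T u g -> L2ctrl T w' ->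
  (forall t, 0 <= t <= T -> w.1 t = w.1 0 + \int[leb]_(x in `[0, t]) w'.1 x) ->
  (forall t, 0 <= t <= T -> w.2 t = w.2 0 + \int[leb]_(x in `[0, t]) w'.2 x) ->
  H1ctrl T (ctrl_lin s w u) (ctrl_lin s w' g).
Proof.
move=> [[Lg1 Lg2] [hu1 hu2]] [Lw1 Lw2] hw1 hw2; split.
  by split; apply: L2_0T_lin.
split => t tT /=.
  exact: (rep_lin s Lg1 Lw1 hu1 hw1 tT).
exact: (rep_lin s Lg2 Lw2 hu2 hw2 tT).
Qed.

Lemma sqn_sub (T s : R) (u w : ctrl R) : L2ctrl T w ->
  sqnorm_ctrl T (ctrl_sub (ctrl_lin s w u) u) = s ^+ 2 * sqnorm_ctrl T w.
Proof.
move=> [Lw1 Lw2]; rewrite /sqnorm_ctrl /ctrl_sub /ctrl_lin /= !sqnorm_0TE /sqn.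
rewrite mulrDr -!RintegralZl //; try by apply: L2D_int.
congr (_ + _); apply: eq_Rintegral => x _; by rewrite addrK exprMn.
Qed.

Lemma key (s f u1 u2 sg m : R) :
  (f = 0 \/ [/\ sg ^+ 2 = 1, 0 < sg * (u1 * u2), m <= u1 ^+ 2, m <= u2 ^+ 2
             & (s * f) ^+ 2 < m]) ->
  `|(s * f + u1) * (s * (- sg * f) + u2)| =
  `|u1 * u2| + s * (f * (sg * u2 - u1)) - s ^+ 2 * f ^+ 2.
Proof.
case=> [->|[sg2 P m1 m2 he]].
  by rewrite !(mulr0, mul0r, add0r, addr0, subr0, expr0n, oppr0).
set e := s * f in he *.
have h1 : 0 < (e + u1) * u1 by nra.
have h2 : 0 < (- sg * e + u2) * u2.
  have : (- sg * e) ^+ 2 = e ^+ 2 by rewrite exprMn sqrrN sg2 mul1r.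
  nra.
have XP : 0 < ((e + u1) * (- sg * e + u2)) * (u1 * u2).
  have := mulr_gt0 h1 h2; congr (0 < _); ring.
have sX : 0 < sg * ((e + u1) * (- sg * e + u2)).
  have : 0 < (sg * ((e + u1) * (- sg * e + u2))) * (sg * (u1 * u2)).
    have -> : (sg * ((e + u1) * (- sg * e + u2))) * (sg * (u1 * u2)) =
      sg ^+ 2 * (((e + u1) * (- sg * e + u2)) * (u1 * u2)) by ring.
    by rewrite sg2 mul1r.
  by rewrite pmulr_lgt0.
have asg : `|sg| = 1.
  by apply/eqP; rewrite -(@eqrXn2 _ 2) // ?normr_ge0 // real_normK ?num_real // sg2 expr1n.
have -> : s * (- sg * f) = - sg * e by rewrite /e; ring.
rewrite -[X in X = _]mul1r -asg -normrM ger0_norm; last exact: ltW.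
rewrite -[`|u1 * u2|]mul1r -asg -normrM ger0_norm; last exact: ltW.
have -> : s * (f * (sg * u2 - u1)) = e * (sg * u2 - sg ^+ 2 * u1).
  by rewrite sg2 mul1r /e; ring.
have -> : s ^+ 2 * f ^+ 2 = sg ^+ 2 * e ^+ 2 by rewrite sg2 mul1r /e exprMn.
ring.
Qed.

End Aux.


Unset Implicit Arguments.

Theorem theorem3p2 (R : realType) (d : measure_display) (X : measurableType d)
  (mu : {measure set X -> \bar R}) (T : R)
  (s0 : X -> R) (S0 : ctrl R -> X -> R) (yd : X -> R)
  (alpha eps beta : R) (ubar gbar : ctrl R) :
  0 < T ->
  L2mu mu s0 ->
  (forall u, L2ctrl T u -> L2mu mu (S0 u)) ->
  (forall u v a, L2ctrl T u -> L2ctrl T v ->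
     {ae mu, forall x, S0 (ctrl_lin a u v) x = a * S0 u x + S0 v x}) ->
  (exists C : R, forall u, L2ctrl T u ->
     sqnorm_mu mu (S0 u) <= C ^+ 2 * sqnorm_ctrl T u) ->
  L2mu mu yd ->
  0 < alpha -> 0 < eps ->
  (opnorm mu T S0) ^+ 2 + alpha + pi ^+ 2 < beta ->
  H1ctrl T ubar gbar ->
  (exists delta : R, 0 < delta /\
     forall v h, H1ctrl T v h -> sqdist_H1 T v h ubar gbar < delta ^+ 2 ->
       Jbeta mu T s0 S0 yd alpha eps beta ubar gbar
         <= Jbeta mu T s0 S0 yd alpha eps beta v h) ->
  forall a b : R,
    (forall t, a < t < b -> 0 <= t <= T /\ ubar.1 t * ubar.2 t != 0) ->
    b - a <= Num.sqrt eps.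
Proof.
move=> T0 Ls0 LS lin [C HC] Lyd al0 eps0 hbeta H1u [delta [d0 Hmin]] a b Hab.
rewrite leNgt; apply/negP => hba.
set L := Num.sqrt eps.
have L0 : 0 < L by rewrite sqrtr_gt0.
have LL : L ^+ 2 = eps by rewrite sqr_sqrtr // ltW.
set p := a + (b - a - L) / 2.
have ap : a < p by rewrite /p ltrDl divr_gt0 // subr_gt0.
have pLb : p + L < b.
  rewrite /p -subr_gt0.
  have -> : b - (a + (b - a - L) / 2 + L) = (b - a - L) / 2 by field.
  by rewrite divr_gt0 // subr_gt0.
have inI : forall t, p <= t <= p + L -> (0 <= t <= T) /\ ubar.1 t * ubar.2 t != 0.
  move=> t /andP[h1 h2]; apply: Hab; apply/andP; split.
    exact: lt_le_trans ap h1.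
  exact: le_lt_trans h2 pLb.
have hp : p <= p <= p + L by rewrite lexx /= lerDl ltW.
have hpL : p <= p + L <= p + L by rewrite lexx andbT lerDl ltW.
have [/andP[p0 _] _] := inI p hp.
have [/andP[_ pLT] _] := inI (p + L) hpL.
have [[Lg1 Lg2] [Hu1 Hu2]] := H1u.
have T0' : 0 <= T := ltW T0.
have Lg1' : L2D (@lebesgue_measure R) `[0, T] gbar.1 := Lg1.
have Lg2' : L2D (@lebesgue_measure R) `[0, T] gbar.2 := Lg2.
pose F1 := fun t => ubar.1 0 + \int[@lebesgue_measure R]_(x in `[0, t]) gbar.1 x.
pose F2 := fun t => ubar.2 0 + \int[@lebesgue_measure R]_(x in `[0, t]) gbar.2 x.
have cF1 : {within `[0, T], continuous F1} := rep_cont T0' Lg1'.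
have cF2 : {within `[0, T], continuous F2} := rep_cont T0' Lg2'.
have eF1 : forall t, 0 <= t <= T -> ubar.1 t = F1 t := Hu1.
have eF2 : forall t, 0 <= t <= T -> ubar.2 t = F2 t := Hu2.
have Lu1 : L2D (@lebesgue_measure R) `[0, T] ubar.1 := L2_cont cF1 eF1.
have Lu2 : L2D (@lebesgue_measure R) `[0, T] ubar.2 := L2_cont cF2 eF2.
have Lu : L2ctrl T ubar by split; [exact Lu1|exact Lu2].
have sub : `[p, p + L] `<=` `[0, T] by apply: subset_itv; rewrite bnd_simp.
have pLp : p <= p + L by rewrite lerDl ltW.
have tT : forall t, p <= t <= p + L -> 0 <= t <= T by move=> t /inI[].
have cF1' := continuous_subspaceW sub cF1.
have cF2' := continuous_subspaceW sub cF2.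
have cP : {within `[p, p + L], continuous (fun t => F1 t * F2 t)}.
  exact: continuous_subspaceW sub (wcM cF1 cF2).
have nzP : forall t, p <= t <= p + L -> F1 t * F2 t != 0.
  by move=> t ht; rewrite -eF1 ?tT // -eF2 ?tT //; case: (inI t ht).
have nz1 : forall t, p <= t <= p + L -> F1 t != 0.
  by move=> t ht; apply: contra (nzP t ht) => /eqP ->; rewrite mul0r.
have nz2 : forall t, p <= t <= p + L -> F2 t != 0.
  by move=> t ht; apply: contra (nzP t ht) => /eqP ->; rewrite mulr0.
have [m1 [m10 hm1]] := lower_bnd pLp cF1' nz1.
have [m2 [m20 hm2]] := lower_bnd pLp cF2' nz2.
pose m := Num.min m1 m2.
have m0 : 0 < m by rewrite lt_min m10 m20.
have hm : forall t, p <= t <= p + L -> m <= ubar.1 t ^+ 2 /\ m <= ubar.2 t ^+ 2.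
  move=> t ht; rewrite eF1 ?tT // eF2 ?tT //; split.
    by apply: le_trans (hm1 t ht); rewrite ge_min lexx.
  by apply: le_trans (hm2 t ht); rewrite ge_min lexx orbT.
have sP := sign_const pLp cP nzP.
pose sg : R := if 0 < F1 p * F2 p then 1 else -1.
have sg2 : sg ^+ 2 = 1 by rewrite /sg; case: ifP => _; rewrite ?sqrrN expr1n.
have hsg : forall t, p <= t <= p + L -> 0 < sg * (ubar.1 t * ubar.2 t).
  move=> t ht; rewrite eF1 ?tT // eF2 ?tT //.
  have := sP t ht; rewrite /sg; case: ifP => h.
    by rewrite mul1r => h'; rewrite -(pmulr_rgt0 _ h).
  have h2 : F1 p * F2 p < 0.
    by rewrite lt_neqAle nzP // andTb leNgt h.
  move=> h'; nra.
pose ph := phi p L.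
pose dph := dphi p L.
pose w : ctrl R := (ph, fun t => - sg * ph t).
pose w' : ctrl R := (dph, fun t => - sg * dph t).
have Lph : L2D (@lebesgue_measure R) `[0, T] ph := L2_phi p L T.
have Ldph : L2D (@lebesgue_measure R) `[0, T] dph := L2_dphi p L T.
have Lw : L2ctrl T w by split; [exact Lph|exact (L2_0T_Z (- sg) Lph)].
have Lw' : L2ctrl T w' by split; [exact Ldph|exact (L2_0T_Z (- sg) Ldph)].
have hw1 : forall t, 0 <= t <= T ->
    ph t = ph 0 + \int[@lebesgue_measure R]_(x in `[0, t]) dph x.
  by move=> t /andP[t0 _]; exact: phi_rep.
have hw2 := rep_Z (- sg) Ldph hw1.
have H1s : forall s, H1ctrl T (ctrl_lin s w ubar) (ctrl_lin s w' gbar).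
  by move=> s; apply: H1_lin.
pose N := sqnorm_ctrl T w + sqnorm_ctrl T w'.
have dist : forall s, sqdist_H1 T (ctrl_lin s w ubar) (ctrl_lin s w' gbar) ubar gbar
    = s ^+ 2 * N.
  by move=> s; rewrite /sqdist_H1 !sqn_sub // -mulrDr.
pose A := fun x => s0 x + S0 ubar x - yd x.
pose B := S0 w.
have mT : measurable (setT : set X) := measurableT.
have Ls0' : L2D mu setT s0 := Ls0.
have Lyd' : L2D mu setT yd := Lyd.
have LA : L2D mu setT A := L2D_comb3 mT Ls0' (LS _ Lu) Lyd'.
have LB : L2D mu setT B := LS _ Lw.
have Lv : forall s, L2ctrl T (ctrl_lin s w ubar).
  move=> s; case: Lw => Lw1 Lw2; split.
    exact (L2_0T_lin s Lu1 Lw1).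
  exact (L2_0T_lin s Lu2 Lw2).
have T1 : forall s, sqnorm_mu mu (fun x => s0 x + S0 (ctrl_lin s w ubar) x - yd x)
    = sqn mu setT A + 2 * s * \int[mu]_(x in setT) (A x * B x) + s ^+ 2 * sqn mu setT B.
  move=> s; rewrite sqnorm_muE (sqn_ae (g := fun x => s * B x + A x)).
  - exact: sqexp.
  - exact: (L2D_comb3 mT Ls0' (LS _ (Lv s)) Lyd').1.
  - exact: (L2D_lin mT s LA LB).1.
  - apply: filterS (lin w ubar s Lw Lu) => x /= ->; rewrite /A /B; ring.
have [Lw1 Lw2] := Lw.
have [Lw1' Lw2'] := Lw'.
have T2 : forall s, sqnorm_ctrl T (ctrl_lin s w ubar) =
    (sqnorm_0T T ubar.1 + 2 * s * \int[@lebesgue_measure R]_(x in `[0, T]) (ubar.1 x * ph x)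
       + s ^+ 2 * sqnorm_0T T ph) +
    (sqnorm_0T T ubar.2 + 2 * s * \int[@lebesgue_measure R]_(x in `[0, T]) (ubar.2 x * (- sg * ph x))
       + s ^+ 2 * sqnorm_0T T ph).
  by move=> s; rewrite /sqnorm_ctrl /= !sqexp0T // (sqnZ0T (- sg) Lph) sqrrN sg2 mul1r.
have T3 : forall s, sqnorm_ctrl T (ctrl_lin s w' gbar) =
    (sqnorm_0T T gbar.1 + 2 * s * \int[@lebesgue_measure R]_(x in `[0, T]) (gbar.1 x * dph x)
       + s ^+ 2 * sqnorm_0T T dph) +
    (sqnorm_0T T gbar.2 + 2 * s * \int[@lebesgue_measure R]_(x in `[0, T]) (gbar.2 x * (- sg * dph x))
       + s ^+ 2 * sqnorm_0T T dph).
  by move=> s; rewrite /sqnorm_ctrl /= !sqexp0T // (sqnZ0T (- sg) Ldph) sqrrN sg2 mul1r.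
pose ell := fun t => ph t * (sg * ubar.2 t - ubar.1 t).
have Lell : L2D (@lebesgue_measure R) `[0, T] (fun t => sg * ubar.2 t - ubar.1 t).
  have := L2_0T_lin sg (L2_0T_Z (-1) Lu1) Lu2.
  have -> : (fun t => sg * ubar.2 t + -1 * ubar.1 t) = (fun t => sg * ubar.2 t - ubar.1 t).
    by apply/funext => t; ring.
  by [].
have T4 : forall s, s ^+ 2 < m ->
    fine (\int[@lebesgue_measure R]_(t in Icc 0 T)
       (`|(ctrl_lin s w ubar).1 t * (ctrl_lin s w ubar).2 t|)%:E) =
    \int[@lebesgue_measure R]_(t in `[0, T]) `|ubar.1 t * ubar.2 t|
    + s * \int[@lebesgue_measure R]_(t in `[0, T]) ell t
    - s ^+ 2 * sqnorm_0T T ph.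
  move=> s sm.
  transitivity (\int[@lebesgue_measure R]_(t in `[0, T])
     (`|ubar.1 t * ubar.2 t| + s * ell t - s ^+ 2 * ph t ^+ 2)).
    apply: eq_Rintegral => t _ /=.
    apply: (key (m := m)).
    have [ht|ht] := boolP (t \in `[p, p + L]).
      have ht' : p <= t <= p + L by move: ht; rewrite in_itv.
      right; split => //.
      - exact: hsg.
      - exact: (hm t ht').1.
      - exact: (hm t ht').2.
      rewrite exprMn; apply: le_lt_trans sm.
      by rewrite -[leRHS]mulr1 ler_wpM2l ?sqr_ge0 // phi_bnd.
    left; rewrite /ph /phi patchE ifF //.
    by apply/negbTE; apply: contra ht => /set_mem.
  rewrite RintDZB //.
  - exact: L2D_abs.
  - exact: L2D_mul.
  - exact: L2D_int.
pose J0 := Jbeta mu T s0 S0 yd alpha eps beta ubar gbar.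
have J0E : J0 = 2^-1 * sqn mu setT A
    + alpha / 2 * (sqnorm_0T T ubar.1 + sqnorm_0T T ubar.2)
    + eps / 2 * (sqnorm_0T T gbar.1 + sqnorm_0T T gbar.2)
    + beta * \int[@lebesgue_measure R]_(t in `[0, T]) `|ubar.1 t * ubar.2 t|.
  by [].
pose Q := 2^-1 * sqn mu setT B + alpha / 2 * (sqnorm_0T T ph + sqnorm_0T T ph)
  + eps / 2 * (sqnorm_0T T dph + sqnorm_0T T dph) - beta * sqnorm_0T T ph.
have Jsum : forall s, s ^+ 2 < m ->
    Jbeta mu T s0 S0 yd alpha eps beta (ctrl_lin s w ubar) (ctrl_lin s w' gbar)
  + Jbeta mu T s0 S0 yd alpha eps beta (ctrl_lin (- s) w ubar) (ctrl_lin (- s) w' gbar)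
  = 2 * J0 + 2 * s ^+ 2 * Q.
  move=> s sm; have sm' : (- s) ^+ 2 < m by rewrite sqrrN.
  rewrite J0E /Jbeta !T1 !T2 !T3 (T4 s sm) (T4 (- s) sm') /Q.
  ring.
have sphi : sqnorm_0T T ph = L / 2 := sqn_phi L0 sub.
have sdphi : sqnorm_0T T dph = (pi / L) ^+ 2 * (L / 2) := sqn_dphi L0 sub.
have nw : sqnorm_ctrl T w = L.
  by rewrite /sqnorm_ctrl /= (sqnZ0T (- sg) Lph) sqrrN sg2 mul1r sphi; field.
have sB : sqn mu setT B <= opnorm mu T S0 ^+ 2 * L.
  have := opnorm_bnd LS lin HC Lw; rewrite nw => h; exact: h L0.
have E : eps / 2 * ((pi / L) ^+ 2 * (L / 2) + (pi / L) ^+ 2 * (L / 2))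
    = pi ^+ 2 * (L / 2).
  by rewrite -LL; field; rewrite gt_eqF.
have Qneg : Q < 0.
  rewrite /Q sdphi E sphi.
  have hb : 0 < L * (beta - (opnorm mu T S0 ^+ 2 + alpha + pi ^+ 2)).
    by rewrite mulr_gt0 // subr_gt0.
  lra.
have N0 : 0 <= N by rewrite /N addr_ge0 // sqnc_ge0.
pose s := Num.min (Num.min m 1 / 2) (delta / (N + 1)).
have N1 : 0 < N + 1 by rewrite ltr_wpDl.
have spos : 0 < s.
  by rewrite /s lt_min !divr_gt0 // lt_min m0 ltr01.
have hs1 : s <= Num.min m 1 / 2 by rewrite /s ge_min lexx.
have hs2 : s <= delta / (N + 1) by rewrite /s ge_min lexx orbT.
have hmm1 : Num.min m 1 <= m by rewrite ge_min lexx.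
have hmm2 : Num.min m 1 <= 1 by rewrite ge_min lexx orbT.
have sm : s ^+ 2 < m.
  have h1 : s <= m / 2 by apply: le_trans hs1 _; rewrite ler_pM2r.
  have h2 : s <= 1 / 2 by apply: le_trans hs1 _; rewrite ler_pM2r.
  nra.
have sd : s ^+ 2 * N < delta ^+ 2.
  have h : s * (N + 1) <= delta by rewrite -ler_pdivlMr.
  have h3 : (s * (N + 1)) ^+ 2 <= delta ^+ 2.
    by rewrite !expr2 ler_pM // mulr_ge0 // ltW.
  have h4 : 0 < s ^+ 2 * (N ^+ 2 + N + 1).
    by rewrite mulr_gt0 ?exprn_gt0 // ltr_wpDl // addr_ge0 // sqr_ge0.
  lra.
have h1 := Hmin _ _ (H1s s).
have h2 := Hmin _ _ (H1s (- s)).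
rewrite !dist sqrrN in h1 h2.
have := Jsum s sm.
have Q' : 0 < s ^+ 2 * - Q by rewrite mulr_gt0 ?exprn_gt0 // oppr_gt0.
move: (h1 sd) (h2 sd); rewrite -/J0.
lra.
Qed.
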